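(* Let $h:(a,b)\to\mathbb{R}$ and $g:(c,d)\to\mathbb{R}$ be real analytic (not identically zero), where $(c,d)$ contains the image of $h$ and each interval is bounded or unbounded. Assume that the function \[x\mapsto\frac{\kappa(h,x)+\kappa(g,h(x))}{1+\kappa(g\circ h,x)},\qquad\text{with the rule }\tfrac{\infty}{\infty}=1,\] is bounded on $(a,b)$. Then $g$ and $h$ are compatible.
   Context: For a real analytic function $f$ on an open interval, not identically zero, the condition number is $\kappa(f,x)=0$ if $x=0$, $\kappa(f,x)=\infty$ if $x\neq0$ and $f(x)=0$, and $\kappa(f,x)=|x|\,|f'(x)|/|f(x)|$ otherwise; set $\mu(f,x)=1+\kappa(f,x)$. Two such functions $h:(a,b)\to\mathbb{R}$, $g:(c,d)\to\mathbb{R}$ with $h((a,b))\subseteq(c,d)$ are called compatible if there is a constant $C>0$ such that $\mu(g,h(x))\,\mu(h,x)\leq C\,\mu(g\circ h,x)$ for all $x\in(a,b)$ (with the rule $\infty/\infty=1$ when this is read as boundedness of the ratio). *)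

(* Defs.v *)
From Stdlib Require Import Reals.
From Coquelicot Require Import Coquelicot.
Open Scope R_scope.

Definition in_oint (a b : Rbar) (x : R) : Prop := Rbar_lt a x /\ Rbar_lt x b.

Definition real_analytic_on (a b : Rbar) (f : R -> R) : Prop :=
  forall x0, in_oint a b x0 ->
    exists r : R, 0 < r /\ exists c : nat -> R,
      forall x, Rabs (x - x0) < r -> is_pseries c (x - x0) (f x).

Definition not_ident_zero (a b : Rbar) (f : R -> R) : Prop :=
  exists x, in_oint a b x /\ f x <> 0.

Definition kappa (f : R -> R) (x : R) : Rbar :=
  if Req_EM_T x 0 then Finite 0
  else if Req_EM_T (f x) 0 then p_infty
  else Finite (Rabs x * Rabs (Derive f x) / Rabs (f x)).

Definition mu (f : R -> R) (x : R) : Rbar := Rbar_plus (Finite 1) (kappa f x).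

(* Quotient N / D of extended nonnegative reals with D >= 1,
   using the rule oo/oo = 1 (and finite/oo = 0). *)
Definition ratio_inf (N D : Rbar) : Rbar :=
  match D with
  | Finite d => Rbar_div N d
  | p_infty => match N with p_infty => Finite 1 | _ => Finite 0 end
  | m_infty => Finite 0
  end.

Definition compatible (a b c d : Rbar) (h g : R -> R) : Prop :=
  exists C : R, 0 < C /\
    forall x, in_oint a b x ->
      Rbar_le (Rbar_mult (mu g (h x)) (mu h x))
              (Rbar_mult (Finite C) (mu (fun y => g (h y)) x)).

(* Main.v *)
Require Import Defs.
From Stdlib Require Import Reals Lra.
From Coquelicot Require Import Coquelicot.
Open Scope R_scope.

Lemma analytic_ex_derive (a b : Rbar) (f : R -> R) x0 :
  real_analytic_on a b f -> in_oint a b x0 -> ex_derive f x0.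
Proof.
  intros Ha Hx. destruct (Ha x0 Hx) as [r [Hr [c Hc]]].
  assert (Hrad : Rbar_lt 0 (CV_radius c)).
  { assert (Ht : Rabs ((x0 + r/2) - x0) < r).
    { replace (x0 + r/2 - x0) with (r/2) by ring. rewrite Rabs_pos_eq; lra. }
    pose proof (Hc _ Ht) as Hs.
    assert (Hl : is_lim_seq (fun n => c n * (r/2) ^ n) 0).
    { apply ex_series_lim_0. eexists. unfold is_pseries in Hs.
      replace (x0 + r/2 - x0) with (r/2) in Hs by ring.
      eapply is_series_ext; [|exact Hs]. intros n. simpl.
      rewrite pow_n_pow. unfold scal; simpl; unfold mult; simpl. ring. }
    assert (Hle : Rbar_le (Rabs (r/2)) (CV_radius c)).
    { apply Rbar_not_lt_le. intros Hlt. exact (CV_disk_outside c (r/2) Hlt Hl). }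
    rewrite Rabs_pos_eq in Hle by lra.
    eapply Rbar_lt_le_trans; [|exact Hle]. simpl. lra. }
  apply ex_derive_ext_loc with (f := fun y => PSeries c (y - x0)).
  { exists (mkposreal r Hr). intros y Hy. apply is_pseries_unique.
    apply Hc. exact Hy. }
  apply (ex_derive_comp (PSeries c) (fun y => y - x0)).
  - apply ex_derive_PSeries. replace (x0 - x0) with 0 by ring. rewrite Rabs_R0. exact Hrad.
  - auto_derive. auto.
Qed.

Lemma kpos u v w : 0 <= Rabs u * Rabs v / Rabs w.
Proof.
  destruct (Req_dec w 0) as [->|Hw].
  - rewrite Rabs_R0. unfold Rdiv. rewrite Rinv_0. lra.
  - apply Rdiv_le_0_compat. apply Rmult_le_pos; apply Rabs_pos. apply Rabs_pos_lt; auto.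
Qed.

Theorem proposition5 (a b c d : Rbar) (h g : R -> R) :
  real_analytic_on a b h -> not_ident_zero a b h ->
  real_analytic_on c d g -> not_ident_zero c d g ->
  (forall x, in_oint a b x -> in_oint c d (h x)) ->
  (exists M : R, forall x, in_oint a b x ->
     Rbar_le (Rbar_abs (ratio_inf (Rbar_plus (kappa h x) (kappa g (h x)))
                                  (Rbar_plus (Finite 1) (kappa (fun y => g (h y)) x))))
             (Finite M)) ->
  compatible a b c d h g.
Proof.
  intros Hh _ Hg _ Him [M HM].
  exists (1 + Rabs M). split. { pose proof (Rabs_pos M). lra. }
  intros x Hx. specialize (HM x Hx).
  assert (Dh : ex_derive h x) by (eapply analytic_ex_derive; eauto).
  assert (Dg : ex_derive g (h x)) by (eapply analytic_ex_derive; eauto).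
  pose proof (Derive_comp g h x Dg Dh) as Hc.
  pose proof (Rabs_pos M) as HMp.
  pose proof (kpos x (Derive h x) (h x)).
  pose proof (kpos (h x) (Derive g (h x)) (g (h x))).
  pose proof (kpos x (Derive (fun y => g (h y)) x) (g (h x))).
  unfold mu, kappa in *. cbv beta in *.
  destruct (Req_EM_T x 0); destruct (Req_EM_T (h x) 0); destruct (Req_EM_T (g (h x)) 0); simpl in *.
  all: repeat match goal with
    | |- context [Rle_dec ?a ?b] => destruct (Rle_dec a b)
    | |- context [Rle_lt_or_eq_dec ?a ?b ?H] => destruct (Rle_lt_or_eq_dec a b H)
    | H : context [Rle_dec ?a ?b] |- _ => destruct (Rle_dec a b)
    | H : context [Rle_lt_or_eq_dec ?a ?b ?H] |- _ => destruct (Rle_lt_or_eq_dec a b H)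
    end; simpl in *; try lra; try tauto.
  all: try (match goal with H : 0 = / ?y |- _ => assert (0 < / y) by (apply Rinv_0_lt_compat; lra); lra end).
  - set (t := Rabs (h x) * Rabs (Derive g (h x)) / Rabs (g (h x))) in *.
    replace ((0 + t) * / (1 + 0)) with t in HM by field.
    pose proof (Rle_abs t). pose proof (Rle_abs M). nra.
  - set (Kh := Rabs x * Rabs (Derive h x) / Rabs (h x)) in *.
    set (Kg := Rabs (h x) * Rabs (Derive g (h x)) / Rabs (g (h x))) in *.
    set (K := Rabs x * Rabs (Derive (fun y : R => g (h y)) x) / Rabs (g (h x))) in *.
    assert (HK : K = Kg * Kh).
    { unfold K, Kg, Kh. rewrite Hc, Rabs_mult. field.
      split; apply Rabs_no_R0; auto. }
    assert (Hq : (Kh + Kg) * / (1 + K) <= M).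
    { eapply Rle_trans; [apply Rle_abs|]. exact HM. }
    assert (Hp : 0 < 1 + K) by lra.
    assert (Hq2 : Kh + Kg <= M * (1 + K)).
    { replace (Kh + Kg) with ((Kh + Kg) * / (1 + K) * (1 + K)) by (field; lra).
      apply Rmult_le_compat_r; lra. }
    pose proof (Rle_abs M).
    assert (M * (1 + K) <= Rabs M * (1 + K)) by (apply Rmult_le_compat_r; lra).
    rewrite HK in *. nra.
Qed.
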